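(* Let $(E,\|\cdot\|)$ be a Banach space over $\mathbb{K}$ and let $\mathcal{F}(\Omega)$ and $\mathcal{F}(\Omega,E)$ be $\varepsilon$-into-compatible. Let $(T^{E},T^{\mathbb{K}})$ be a consistent and strong family for $(\mathcal{F},E)$, $\nu\colon\omega\to(0,\infty)$ a weight, suppose $\mathcal{F}\nu(\Omega)$ is a Banach space whose closed unit ball is a compact subset of $\mathcal{F}(\Omega)$, and let $U\subset\omega$ be a set of uniqueness for $(T^{\mathbb{K}},\mathcal{F}\nu)$. If $(f_\iota)_{\iota\in I}$ is a net in $\mathcal{F}_\varepsilon\nu(\Omega,E)$ with $\sup_{\iota\in I}\sup_{x\in\omega}\|T^{E}(f_\iota)(x)\|\nu(x)<\infty$ such that $\lim_\iota T^{E}(f_\iota)(x)$ exists in $E$ for every $x\in U$, then there is $f\in\mathcal{F}_\varepsilon\nu(\Omega,E)$ such that $(f_\iota)_{\iota\in I}$ converges to $f$ in $\mathcal{F}(\Omega,E)$.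
   Context: $\mathbb{K}\in\{\mathbb{R},\mathbb{C}\}$; ''lcHs'' means locally convex Hausdorff space over $\mathbb{K}$. Framework: Let $\Omega,\omega$ be non-empty sets. For an lcHs $F$, $F'_\kappa$ is $F'$ with the topology of uniform convergence on absolutely convex compact subsets of $F$, and $F\varepsilon E:=L_e(F'_\kappa,E)$ is the space of continuous linear maps $F'_\kappa\to E$ with the topology of uniform convergence on equicontinuous subsets of $F'$. Let $\mathcal{F}(\Omega)\subset\mathbb{K}^\Omega$ and $\mathcal{F}(\Omega,E)\subset E^\Omega$ be linear subspaces carrying locally convex Hausdorff topologies with $\delta_x\in\mathcal{F}(\Omega)'$ for all $x\in\Omega$. Define $S\colon\mathcal{F}(\Omega)\varepsilon E\to E^\Omega$, $S(u)(x):=u(\delta_x)$. The spaces are $\varepsilon$-into-compatible if $S$ maps into $\mathcal{F}(\Omega,E)$ and is a linear topological isomorphism onto its range. Let $T^{\mathbb{K}}\colon\mathcal{F}(\Omega)\to\mathbb{K}^\omega$ and $T^{E}\colon\mathcal{F}(\Omega,E)\to E^\omega$ be linear and $T^{\mathbb{K}}_x:=\delta_x\circ T^{\mathbb{K}}$. $(T^E,T^{\mathbb{K}})$ is consistent for $(\mathcal{F},E)$ if for every $u\in\mathcal{F}(\Omega)\varepsilon E$ we have $S(u)\in\mathcal{F}(\Omega,E)$ and for all $x\in\omega$: $T^{\mathbb{K}}_x\in\mathcal{F}(\Omega)'$ and $T^{E}(S(u))(x)=u(T^{\mathbb{K}}_x)$. It is strong for $(\mathcal{F},E)$ if for all $e'\in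 E'$, $f\in\mathcal{F}(\Omega,E)$: $e'\circ f\in\mathcal{F}(\Omega)$ and $T^{\mathbb{K}}(e'\circ f)(x)=e'(T^E(f)(x))$ for all $x\in\omega$. For a weight $\nu\colon\omega\to(0,\infty)$ set $\mathcal{F}\nu(\Omega):=\{f\in\mathcal{F}(\Omega): |f|_{\mathcal{F}\nu}:=\sup_{x\in\omega}|T^{\mathbb{K}}(f)(x)|\nu(x)<\infty\}$ with this norm. Let $B_{\mathcal{F}\nu}$ be its closed unit ball, $B^{\circ\mathcal{F}'}_{\mathcal{F}\nu}:=\{y'\in\mathcal{F}(\Omega)':|y'(f)|\le1\ \forall f\in B_{\mathcal{F}\nu}\}$ and $\mathcal{F}_\varepsilon\nu(\Omega,E):=S(\{u\in\mathcal{F}(\Omega)\varepsilon E: u(B^{\circ\mathcal{F}'}_{\mathcal{F}\nu})\text{ is bounded in }E\})$. A set $U\subset\omega$ is a set of uniqueness for $(T^{\mathbb{K}},\mathcal{F}\nu)$ if every $f\in\mathcal{F}\nu(\Omega)$ with $T^{\mathbb{K}}(f)(x)=0$ for all $x\in U$ is $0$. *)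

(* Defs.v *)
From HB Require Import structures.
From mathcomp Require Import all_boot all_order all_algebra.
From mathcomp Require Import all_classical all_reals all_analysis.
From mathcomp Require Import complex.
Unset Printing Implicit Defensive.
Import Order.TTheory GRing.Theory Num.Theory.
Import numFieldNormedType.Exports.
Local Open Scope classical_set_scope.
Local Open Scope ring_scope.

Definition RorC (K : numFieldType) : Prop :=
  exists R : realType, K = (R : numFieldType) \/ K = (R[i] : numFieldType).

Definition directed_preorder (I : Type) (le : I -> I -> Prop) : Prop :=
  inhabited I /\ (forall i, le i i) /\
  (forall i j k, le i j -> le j k -> le i k) /\
  (forall i j, exists k, le i k /\ le j k).

Definition net_cvg (I : Type) (le : I -> I -> Prop) (T : topologicalType)
  (x : I -> T) (l : T) : Prop :=
  forall N, nbhs l N -> exists i0, forall i, le i0 i -> N (x i).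

Section Defs.
Context {K : numFieldType}.

Definition linear_into_Kfun (V : lmodType K) (A : Type) (j : V -> A -> K) :=
  forall a u v x, j (a *: u + v) x = a * j u x + j v x.
Definition linear_into_Efun (V : lmodType K) (E : lmodType K) (A : Type)
  (j : V -> A -> E) :=
  forall a u v x, j (a *: u + v) x = a *: j u x + j v x.

Definition dual_set (F : tvsType K) : set (F -> K) :=
  [set y | (forall a u v, y (a *: u + v) = a * y u + y v) /\ continuous (y : F -> K)].

Definition absconvex (F : tvsType K) (A : set F) : Prop :=
  forall (a b : K) u v, A u -> A v -> `|a| + `|b| <= 1 -> A (a *: u + b *: v).

Definition acc_family (F : tvsType K) : set F -> Prop :=
  fun A => compact A /\ absconvex F A.

(** F'_kappa : functionals on F with the topology of uniform convergence on
    absolutely convex compact subsets of F *)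
Definition dual_kappa (F : tvsType K) := {family acc_family F, F -> K}.

Definition equicont (F : tvsType K) (M : set (F -> K)) : Prop :=
  forall (f0 : F) (e : K), 0 < e ->
    \forall f \near f0, forall y, M y -> `|y f - y f0| < e.

Definition equicont_family (F : tvsType K) : set (dual_kappa F) -> Prop :=
  fun M => M `<=` dual_set F /\ equicont F M.

(** F eps E = L_e(F'_kappa, E): continuous linear maps F'_kappa -> E, with the
    topology of uniform convergence on equicontinuous subsets of F'.
    An element is represented by its (unique) extension by 0 outside F'. *)
Definition eps_type (F : tvsType K) (E : normedModType K) :=
  {family equicont_family F, dual_kappa F -> E}.

Definition eps_set (F : tvsType K) (E : normedModType K) : set (eps_type F E) :=
  [set u | (forall (a : K) (y1 y2 : dual_kappa F), dual_set F y1 -> dual_set F y2 ->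
             u (fun f => a * y1 f + y2 f) = a *: u y1 + u y2)
         /\ {within (dual_set F : set (dual_kappa F)), continuous (u : dual_kappa F -> E)}
         /\ (forall y, ~ dual_set F y -> u y = 0)].

Definition delta (F : tvsType K) (Om : Type) (jK : F -> Om -> K) (x : Om) : F -> K :=
  fun f => jK f x.

Definition Sop (F : tvsType K) (E : normedModType K) (Om : Type)
  (jK : F -> Om -> K) (u : eps_type F E) : Om -> E :=
  fun x => u (delta F Om jK x : dual_kappa F).

(** eps-into-compatibility: S maps into F(Omega,E) and is a topological
    isomorphism onto its range (linearity of S is automatic). *)
Definition eps_into_compatible (F : tvsType K) (E : normedModType K)
  (FE : tvsType K) (Om : Type) (jK : F -> Om -> K) (jE : FE -> Om -> E) : Prop :=
  (forall x, dual_set F (delta F Om jK x)) /\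
  exists SF : eps_type F E -> FE,
    (forall u, eps_set F E u -> jE (SF u) = Sop F E Om jK u) /\
    {within eps_set F E, continuous SF} /\
    exists SFinv : FE -> eps_type F E,
      (forall u, eps_set F E u -> SFinv (SF u) = u) /\
      {within SF @` eps_set F E, continuous SFinv}.

Definition consistent_family (F : tvsType K) (E : normedModType K)
  (FE : tvsType K) (Om om : Type) (jK : F -> Om -> K) (jE : FE -> Om -> E)
  (TE : FE -> om -> E) (TK : F -> om -> K) : Prop :=
  forall u, eps_set F E u ->
    exists g : FE, jE g = Sop F E Om jK u /\
      forall x : om, dual_set F (fun f => TK f x) /\
                     TE g x = u ((fun f => TK f x) : dual_kappa F).

Definition strong_family (F : tvsType K) (E : normedModType K)
  (FE : tvsType K) (Om om : Type) (jK : F -> Om -> K) (jE : FE -> Om -> E)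
  (TE : FE -> om -> E) (TK : F -> om -> K) : Prop :=
  forall (e' : E -> K), ((forall a v w, e' (a *: v + w) = a * e' v + e' w) /\ continuous e') ->
  forall g : FE, exists h : F, jK h = (fun x => e' (jE g x)) /\
     forall x : om, TK h x = e' (TE g x).

Definition Fnu_set (F : tvsType K) (om : Type) (TK : F -> om -> K)
  (nu : om -> K) : set F :=
  [set f | exists C : K, forall x, `|TK f x| * nu x <= C].

Definition Bnu (F : tvsType K) (om : Type) (TK : F -> om -> K)
  (nu : om -> K) : set F :=
  [set f | forall x, `|TK f x| * nu x <= 1].

Definition polar_Bnu (F : tvsType K) (om : Type) (TK : F -> om -> K)
  (nu : om -> K) : set (F -> K) :=
  [set y | dual_set F y /\ forall f, Bnu F om TK nu f -> `|y f| <= 1].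

Definition Fnu_banach (F : tvsType K) (om : Type) (TK : F -> om -> K)
  (nu : om -> K) : Prop :=
  (forall f, Fnu_set F om TK nu f -> (forall x, TK f x = 0) -> f = 0) /\
  (forall s : nat -> F, (forall n, Fnu_set F om TK nu (s n)) ->
     (forall e : K, 0 < e -> exists N, forall m n, (N <= m)%N -> (N <= n)%N ->
        forall x, `|TK (s n - s m) x| * nu x <= e) ->
     exists f, Fnu_set F om TK nu f /\
       forall e : K, 0 < e -> exists N, forall n, (N <= n)%N ->
        forall x, `|TK (s n - f) x| * nu x <= e).

Definition Feps_nu (F : tvsType K) (E : normedModType K) (FE : tvsType K)
  (Om om : Type) (jK : F -> Om -> K) (jE : FE -> Om -> E)
  (TK : F -> om -> K) (nu : om -> K) : set FE :=
  [set g | exists u : eps_type F E, eps_set F E u /\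
      (exists C : K, forall y, polar_Bnu F om TK nu y -> `|u (y : dual_kappa F)| <= C) /\
      jE g = Sop F E Om jK u].

Definition uniqueness_set (F : tvsType K) (om : Type) (TK : F -> om -> K)
  (nu : om -> K) (U : set om) : Prop :=
  forall f, Fnu_set F om TK nu f -> (forall x, U x -> TK f x = 0) -> f = 0.

End Defs.

(* Main.v *)
Require Import Defs.
From HB Require Import structures.
From mathcomp Require Import all_boot all_order all_algebra.
From mathcomp Require Import all_classical all_reals all_analysis.
From mathcomp Require Import complex.
Import Order.TTheory GRing.Theory Num.Theory.
Import numFieldNormedType.Exports.
Local Open Scope classical_set_scope.
Local Open Scope ring_scope.
From mathcomp Require Import ring lra.
Section HBreal.
Variables (R : realType) (V : zmodType) (sc : R -> V -> V).
Hypothesis scD : forall a x y, sc a (x + y) = sc a x + sc a y.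
Hypothesis scDl : forall a b x, sc (a + b) x = sc a x + sc b x.
Hypothesis scA : forall a b x, sc a (sc b x) = sc (a * b) x.
Hypothesis sc1 : forall x, sc 1 x = x.
Variable p : V -> R.
Hypothesis pD : forall x y, p (x + y) <= p x + p y.
Hypothesis pZ : forall a x, p (sc a x) = `|a| * p x.

Lemma sc0 x : sc 0 x = 0.
Proof. by apply: (@addrI _ (sc 0 x)); rewrite -scDl !addr0. Qed.
Lemma scx0 a : sc a 0 = 0.
Proof. by apply: (@addrI _ (sc a 0)); rewrite -scD !addr0. Qed.
Lemma scN1 x : sc (-1) x = - x.
Proof. by apply: (@addrI _ x); rewrite subrr -{1}(sc1 x) -scDl subrr sc0. Qed.
Lemma scN a x : sc a (- x) = - sc a x.
Proof. by rewrite -scN1 scA mulrN1 -mulN1r -scA scN1. Qed.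
Lemma scB a x y : sc a (x - y) = sc a x - sc a y.
Proof. by rewrite scD scN. Qed.
Lemma p0 : p 0 = 0.
Proof. by rewrite -(sc0 0) pZ normr0 mul0r. Qed.
Lemma pN x : p (- x) = p x.
Proof. by rewrite -scN1 pZ normrN normr1 mul1r. Qed.
Lemma p_ge0 x : 0 <= p x.
Proof.
have := pD x (- x); rewrite subrr p0 pN => h.
have : 0 <= p x + p x by [].
by rewrite -mulr2n -mulr_natr pmulr_lge0.
Qed.
Lemma scNl a x : sc (- a) x = - sc a x.
Proof. by apply: (@addrI _ (sc a x)); rewrite -scDl !subrr sc0. Qed.

Definition validG (G : set (V * R)) :=
  [/\ G (0, 0),
      (forall a x s y t, G (x, s) -> G (y, t) -> G (sc a x + y, a * s + t)),
      (forall x s t, G (x, s) -> G (x, t) -> s = t) &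
      (forall x s, G (x, s) -> s <= p x)].

Lemma validG_scale G k x s : validG G -> G (x, s) -> G (sc k x, k * s).
Proof.
case=> G00 Gc _ _ Gxs; have := Gc k x s 0 0 Gxs G00.
by rewrite addr0 addr0.
Qed.

Lemma validG_ext (H : set (V * R)) (w : V) : validG H -> ~ (exists s, H (w, s)) ->
  exists H', [/\ validG H', H `<=` H' & exists c, H' (w, c)].
Proof.
move=> vH; have [H00 Hc Hf Hp] := vH => Dw.
have Tb : forall x s y t, H (x, s) -> H (y, t) -> s - p (x - w) <= p (y + w) - t.
  move=> x s y t Hxs Hyt.
  have := Hc 1 x s y t Hxs Hyt; rewrite sc1 mul1r => /Hp hxy.
  have := pD (x - w) (y + w); rewrite addrACA addNr addr0 => hD.
  lra.
pose S := [set r | exists x s, H (x, s) /\ r = s - p (x - w)].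
have hS : has_sup S.
  split; first by exists (0 - p (0 - w)); exists 0, 0.
  exists (p (0 + w) - 0) => r [x [s [Hxs ->]]]; exact: Tb.
pose c := sup S.
have hc1 : forall x s, H (x, s) -> s - p (x - w) <= c.
  by move=> x s Hxs; apply: sup_upper_bound => //; exists x, s.
have hc2 : forall y t, H (y, t) -> c <= p (y + w) - t.
  move=> y t Hyt; apply: ge_sup; first by case: hS.
  by move=> r [x [s [Hxs ->]]]; exact: Tb.
pose H' := [set z | exists x s a, H (x, s) /\ z = (x + sc a w, s + a * c)].
exists H'; split.
- split.
  + by exists 0, 0, 0; split => //; rewrite sc0 addr0 mul0r addr0.
  + move=> a x s y t [x1 [s1 [a1 [H1 [-> ->]]]]] [x2 [s2 [a2 [H2 [-> ->]]]]].
    exists (sc a x1 + x2), (a * s1 + s2), (a * a1 + a2); split; first exact: Hc.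
    congr pair; last by ring.
    by rewrite scD scA scDl addrACA.
  + move=> x s t [x1 [s1 [a1 [H1 [-> ->]]]]] [x2 [s2 [a2 [H2 [e ->]]]]].
    have [ea|nea] := eqVneq a1 a2.
      move: e; rewrite ea => /addIr ex; move: H2; rewrite -ex => H2.
      by rewrite (Hf _ _ _ H1 H2).
    exfalso; apply: Dw.
    have e2 : sc (a1 - a2) w = x2 - x1.
      rewrite scDl scNl; apply: (@addrI _ x1).
      by rewrite addrA e addrK addrC subrK.
    have hk : (a1 - a2)^-1 * (a1 - a2) = 1 by rewrite mulVf // subr_eq0.
    exists ((a1 - a2)^-1 * (-1 * s1 + s2)).
    have -> : w = sc ((a1 - a2)^-1) (sc (-1) x1 + x2).
      by rewrite scN1 [- x1 + _]addrC -e2 scA hk sc1.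
    by apply: (@validG_scale H _ _ _ vH); apply: Hc.
  + move=> x s [x1 [s1 [a1 [H1 [-> ->]]]]].
    have [a0|a0|->] := ltgtP a1 0; last by rewrite sc0 addr0 mul0r addr0; exact: Hp.
    * pose k := - a1^-1.
      have k0 : 0 < k by rewrite /k oppr_gt0 invr_lt0.
      have := hc1 _ _ (@validG_scale H k _ _ vH H1).
      have na0 : 0 <= - a1 by rewrite oppr_ge0 ltW.
      move=> /(ler_wpM2l na0).
      rewrite mulrBr.
      have e1 : - a1 * (k * s1) = s1.
        by rewrite /k mulrA mulrNN mulfV ?mul1r // lt_eqF.
      have e2 : - a1 * p (sc k x1 - w) = p (x1 + sc a1 w).
        rewrite -(@ger0_norm _ (- a1)) ?oppr_ge0 ?ltW // -pZ scB scA.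
        rewrite /k mulrNN mulfV ?lt_eqF // sc1.
        by rewrite scNl opprK.
      rewrite e1 e2 => h; lra.
    * have := hc2 _ _ (@validG_scale H (a1^-1) _ _ vH H1).
      move=> /(ler_wpM2l (ltW a0)); rewrite mulrBr.
      have e1 : a1 * (a1^-1 * s1) = s1 by rewrite mulrA mulfV ?mul1r // gt_eqF.
      have e2 : a1 * p (sc a1^-1 x1 + w) = p (x1 + sc a1 w).
        rewrite -{1}(@ger0_norm _ a1) ?ltW // -pZ scD scA.
        by rewrite mulfV ?gt_eqF // sc1.
      rewrite e1 e2 => h; lra.
- move=> [x s] Hxs; exists x, s, 0; split => //.
  by rewrite sc0 addr0 mul0r addr0.
- by exists c; exists 0, 0, 1; split => //; rewrite sc1 add0r mul1r add0r.
Qed.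
Definition G0 v0 : set (V * R) := [set z | exists a, z = (sc a v0, a * p v0)].

Lemma validG0 v0 : validG (G0 v0).
Proof.
split.
- by exists 0; rewrite sc0 mul0r.
- move=> a x s y t [a1 [-> ->]] [a2 [-> ->]]; exists (a * a1 + a2).
  by rewrite scA scDl mulrDl mulrA.
- move=> x s t [a1 [-> ->]] [a2 [e ->]].
  have [->//|ne] := eqVneq a1 a2.
  have : p (sc (a1 - a2) v0) = 0 by rewrite scDl scNl e subrr p0.
  rewrite pZ => /eqP; rewrite mulf_eq0 normr_eq0 subr_eq0 (negbTE ne) /= => /eqP ->.
  by rewrite !mulr0.
- move=> x s [a [-> ->]]; rewrite pZ; apply: ler_wpM2r; first exact: p_ge0.
  exact: ler_norm.
Qed.

Theorem HB_real v0 : exists phi : V -> R,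
  [/\ (forall a x y, phi (sc a x + y) = a * phi x + phi y),
      (forall x, phi x <= p x) & phi v0 = p v0].
Proof.
pose P := [set G | validG (G0 v0 `|` G)].
have chainP : forall F : set (set (V * R)), F `<=` P -> total_on F subset ->
    P (\bigcup_(X in F) X).
  move=> F FP Ftot.
  have pairH : forall z1 z2, (G0 v0 `|` \bigcup_(X in F) X) z1 ->
      (G0 v0 `|` \bigcup_(X in F) X) z2 ->
      exists H, [/\ validG H, H `<=` G0 v0 `|` \bigcup_(X in F) X, H z1 & H z2].
    move=> z1 z2 [g1|[X1 FX1 X1z]] [g2|[X2 FX2 X2z]].
    + by exists (G0 v0); split; [exact: validG0 | move=> z; left | by [] | by []].
    + exists (G0 v0 `|` X2); split; [exact: FP | | by left | by right].
      by move=> z [?|?]; [left|right; exists X2].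
    + exists (G0 v0 `|` X1); split; [exact: FP | | by right | by left].
      by move=> z [?|?]; [left|right; exists X1].
    + have [S12|S21] := Ftot _ _ FX1 FX2.
      * exists (G0 v0 `|` X2); split; [exact: FP | | by right; apply: S12 | by right].
        by move=> z [?|?]; [left|right; exists X2].
      * exists (G0 v0 `|` X1); split; [exact: FP | | by right | by right; apply: S21].
        by move=> z [?|?]; [left|right; exists X1].
  split.
  - by left; exists 0; rewrite sc0 mul0r.
  - move=> a x s y t h1 h2; have [H [vH sH H1 H2]] := pairH _ _ h1 h2.
    by apply: sH; case: vH => _ Hc _ _; apply: Hc.
  - move=> x s t h1 h2; have [H [vH sH H1 H2]] := pairH _ _ h1 h2.
    by case: vH => _ _ Hf _; apply: Hf H1 H2.
  - move=> x s h1; have [H [vH sH H1 _]] := pairH _ _ h1 h1.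
    by case: vH => _ _ _ Hp; apply: Hp.
have [A [PA Amax]] := Zorn_bigcup chainP.
pose H := G0 v0 `|` A.
have allD : forall x, exists s, H (x, s).
  move=> w; apply: contrapT => Dw.
  have [H' [vH' sH' [c H'c]]] := @validG_ext H w PA Dw.
  apply: (Amax H'); last first.
    rewrite /P /=; have -> : G0 v0 `|` H' = H'.
      by apply/seteqP; split => [z [g|//]|z]; [apply: sH'; left | right].
    exact: vH'.
  split; first by move=> z Az; apply: sH'; right.
  move=> sub; apply: Dw; exists c.
  by right; apply: sub.
pose phi x := projT1 (cid (allD x)).
have phiP : forall x, H (x, phi x) by move=> x; rewrite /phi; case: cid.
case: PA => H00 Hc Hf Hp.
exists phi; split.
- move=> a x y; apply: (Hf (sc a x + y)); first exact: phiP.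
  by apply: Hc; apply: phiP.
- by move=> x; apply: Hp; apply: phiP.
- apply: (Hf v0); first exact: phiP.
  by left; exists 1; rewrite sc1 mul1r.
Qed.
End HBreal.
Lemma near_norm_lt (K : numFieldType) (E : normedModType K) (x : E) (eps : K) :
  0 < eps -> \forall z \near x, `|x - z| < eps.
Proof. by move=> e0; have := @cvg_id _ (nbhs x); move/fcvgrPdist_lt => /(_ _ e0). Qed.

Lemma lin_bdd_cont (K : numFieldType) (E : normedModType K) (e : E -> K) :
  (forall a v w, e (a *: v + w) = a * e v + e w) ->
  (forall z, `|e z| <= `|z|) -> continuous e.
Proof.
move=> lin bd.
have eB : forall x z, e x - e z = e (x - z).
  by move=> x z; rewrite [in RHS]addrC -[in RHS]scaleN1r lin mulN1r addrC.
move=> x; apply/cvgrPdist_lt => eps eps0.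
near=> z.
rewrite eB; apply: le_lt_trans (bd _) _.
near: z; exact: near_norm_lt.
Unshelve. all: by end_near.
Qed.
Section CX.
Variable R : realType.
Local Open Scope complex_scope.
Lemma ReD (x y : R[i]) : complex.Re (x + y) = complex.Re x + complex.Re y.
Proof. by case: x; case: y. Qed.
Lemma ReM_real (r : R) (x : R[i]) : complex.Re (r%:C * x) = r * complex.Re x.
Proof. by case: x => a b /=; rewrite mul0r subr0. Qed.
Lemma Re_le (x y : R[i]) : x <= y -> complex.Re x <= complex.Re y.
Proof. by rewrite lecE => /andP[]. Qed.
Lemma ge0_real (x : R[i]) : 0 <= x -> x = (complex.Re x)%:C.
Proof. by move=> /ger0_Im; case: x => a b /= ->. Qed.
Lemma norm_real (r : R) : `|r%:C| = (`|r|)%:C :> R[i].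
Proof. by rewrite /Num.norm /= expr0n /= addr0 sqrtr_sqr. Qed.
Lemma Re_real (r : R) : complex.Re (r%:C) = r.
Proof. by []. Qed.
Lemma Re_le_norm (x : R[i]) : complex.Re x <= complex.Re `|x|.
Proof.
case: x => a b; rewrite /Num.norm /=.
apply: le_trans (ler_norm a) _; rewrite -sqrtr_sqr.
apply: ler_wsqrtr; rewrite lerDl; exact: sqr_ge0.
Qed.
Lemma norming_cplx (E : normedModType R[i]) (w : E) :
  exists e : E -> R[i], [/\ (forall a v z, e (a *: v + z) = a * e v + e z),
     (forall z, `|e z| <= `|z|) & `|e w| = `|w|].
Proof.
pose sc (r : R) (x : E) := r%:C *: x.
pose p (x : E) := complex.Re `|x|.
have scD : forall a x y, sc a (x + y) = sc a x + sc a y by move=> *; exact: scalerDr.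
have scDl : forall a b x, sc (a + b) x = sc a x + sc b x.
  by move=> *; rewrite /sc rmorphD scalerDl.
have scA : forall a b x, sc a (sc b x) = sc (a * b) x.
  by move=> *; rewrite /sc scalerA rmorphM.
have sc1 : forall x, sc 1 x = x by move=> x; rewrite /sc rmorph1 scale1r.
have pD : forall x y, p (x + y) <= p x + p y.
  by move=> x y; rewrite /p -ReD; apply: Re_le; exact: ler_normD.
have pZ : forall a x, p (sc a x) = `|a| * p x.
  by move=> a x; rewrite /p /sc normrZ norm_real ReM_real.
have [psi [lin bd pw]] := @HB_real R E sc scD scDl scA sc1 p pD pZ w.
have psi0 : psi 0 = 0.
  have := lin 1 0 0; rewrite sc1 addr0 mul1r => h.
  by apply: (@addrI _ (psi 0)); rewrite addr0 -h.
have psiD : forall x y, psi (x + y) = psi x + psi y.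
  by move=> x y; have := lin 1 x y; rewrite sc1 mul1r.
have psiZ : forall r x, psi (r%:C *: x) = r * psi x.
  by move=> r x; have := lin r x 0; rewrite addr0 psi0 addr0.
have psiN : forall x, psi (- x) = - psi x.
  by move=> x; rewrite -scaleN1r -(rmorph1 (real_complex R)) -rmorphN psiZ mulN1r.
pose phi (x : E) := (psi x)%:C - 'i%C * (psi ('i%C *: x))%:C.
have phiD : forall x y, phi (x + y) = phi x + phi y.
  by move=> x y; rewrite /phi scalerDr !psiD !rmorphD; ring.
have phiR : forall r x, phi (r%:C *: x) = r%:C * phi x.
  move=> r x; rewrite /phi (psiZ r x) scalerA [_ * r%:C]mulrC -scalerA (psiZ r ('i%C *: x)) !rmorphM; ring.
have phiI : forall x, phi ('i%C *: x) = 'i%C * phi x.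
  move=> x; rewrite /phi scalerA -expr2 sqr_i scaleN1r psiN rmorphN.
  rewrite mulrBr mulrA -expr2 sqr_i; ring.
have phi0 : phi 0 = 0 by rewrite /phi scaler0 psi0 mulr0 subr0.
have phiZ : forall a x, phi (a *: x) = a * phi x.
  move=> a x; rewrite [a]complexE scalerDl -scalerA phiD phiR phiI phiR.
  by rewrite mulrDl mulrA.
have Rephi : forall x, complex.Re (phi x) = psi x.
  by move=> x; rewrite /phi /=; ring.
have bnd : forall z, `|phi z| <= `|z|.
  move=> z; have [t0|tn0] := eqVneq (phi z) 0; first by rewrite t0 normr0.
  pose c := `|phi z| / phi z.
  have e1 : phi (c *: z) = `|phi z| by rewrite phiZ /c mulfVK.
  have nc : `|c| = 1 by rewrite /c normf_div normr_id divff // normr_eq0.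
  have := bd (c *: z).
  rewrite -Rephi e1 /p normrZ nc mul1r => h.
  rewrite (ge0_real _ (normr_ge0 (phi z))) (ge0_real _ (normr_ge0 z)) lecR; exact: h.
exists phi; split.
- by move=> a v z; rewrite phiD phiZ.
- exact: bnd.
- apply/eqP; rewrite eq_le bnd /=.
  rewrite (ge0_real _ (normr_ge0 w)) (ge0_real _ (normr_ge0 (phi w))) lecR.
  have -> : complex.Re `|w| = psi w by rewrite pw.
  by rewrite -Rephi; exact: Re_le_norm.
Qed.
End CX.
From mathcomp Require Import ring lra.
Section Main.
Variables (K : numFieldType) (E : completeNormedModType K) (Om om : Type).
Variables (FK : tvsType K) (jK : FK -> Om -> K).
Hypothesis jK_lin : linear_into_Kfun FK Om jK.
Hypothesis jK_inj : injective jK.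
Variables (FE : tvsType K) (jE : FE -> Om -> E).
Hypothesis jE_lin : linear_into_Efun FE E Om jE.
Hypothesis jE_inj : injective jE.
Hypothesis Hcompat : eps_into_compatible FK E FE Om jK jE.
Hypothesis Hom : inhabited om.
Variables (TK : FK -> om -> K) (TE : FE -> om -> E).
Hypothesis TK_lin : linear_into_Kfun FK om TK.
Hypothesis TE_lin : linear_into_Efun FE E om TE.
Hypothesis Hcons : consistent_family FK E FE Om om jK jE TE TK.
Hypothesis Hstrong : strong_family FK E FE Om om jK jE TE TK.
Variables (nu : om -> K).
Hypothesis nu_pos : forall x, 0 < nu x.
Hypothesis Hball : compact (Bnu FK om TK nu).
Variable U : set om.
Hypothesis HU : uniqueness_set FK om TK nu U.
Variables (I : Type) (le : I -> I -> Prop).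
Hypothesis Hdir : directed_preorder I le.
Variable f : I -> FE.
Hypothesis Hbd : exists C : K, forall i x, `|TE (f i) x| * nu x <= C.
Hypothesis Hf : forall i, Feps_nu FK E FE Om om jK jE TK nu (f i).
Hypothesis Hlim : forall x, U x -> exists l : E, net_cvg I le E (fun i => TE (f i) x) l.
Hypothesis Hnorm : forall w : E, exists e : E -> K,
  [/\ (forall a v z, e (a *: v + z) = a * e v + e z),
      (forall z, `|e z| <= `|z|) & `|e w| = `|w|].

Local Notation dual := (dual_set FK).
Local Notation B := (Bnu FK om TK nu).

Lemma TK0 x : TK 0 x = 0.
Proof.
have := TK_lin 1 0 0 x; rewrite scale1r addr0 mul1r => h.
by apply: (@addrI _ (TK 0 x)); rewrite addr0 -h.
Qed.
Lemma TKZ a u x : TK (a *: u) x = a * TK u x.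
Proof. by have := TK_lin a u 0 x; rewrite !addr0 TK0 addr0. Qed.
Lemma TKD u v x : TK (u + v) x = TK u x + TK v x.
Proof. by have := TK_lin 1 u v x; rewrite scale1r mul1r. Qed.
Lemma TKB u v x : TK (u - v) x = TK u x - TK v x.
Proof. by rewrite TKD -scaleN1r TKZ mulN1r. Qed.

Lemma dual0 y : dual y -> y 0 = 0.
Proof.
case=> lin _; have := lin 1 0 0; rewrite scale1r addr0 mul1r => h.
by apply: (@addrI _ (y 0)); rewrite addr0 -h.
Qed.
Lemma dualZ y a u : dual y -> y (a *: u) = a * y u.
Proof. move=> dy; have [lin _] := dy; by have := lin a u 0; rewrite !addr0 dual0 // addr0. Qed.
Lemma dualD y u v : dual y -> y (u + v) = y u + y v.
Proof. by case=> lin _; have := lin 1 u v; rewrite scale1r mul1r. Qed.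
Lemma dualB y u v : dual y -> y (u - v) = y u - y v.
Proof. by move=> dy; rewrite dualD // -scaleN1r dualZ // mulN1r. Qed.

Lemma dual_comb a y1 y2 : dual y1 -> dual y2 -> dual (fun g => a * y1 g + y2 g).
Proof.
move=> d1 d2; split.
  by move=> b u v; case: d1 => l1 _; case: d2 => l2 _; rewrite l1 l2; ring.
have [_ c1] := d1; have [_ c2] := d2.
move=> x; apply: cvgD; last exact: c2.
by apply: cvgMr; exact: c1.
Qed.

Lemma B_acc : acc_family FK B.
Proof.
split => //.
move=> a b u v Bu Bv Hab x.
rewrite TKD !TKZ.
apply: le_trans (_ : (`|a| * `|TK u x| + `|b| * `|TK v x|) * nu x <= _).
  apply: ler_wpM2r; first exact: ltW.
  by apply: le_trans (ler_normD _ _) _; rewrite !normrM.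
rewrite mulrDl -!mulrA.
apply: le_trans Hab.
apply: lerD.
  by rewrite -[X in _ <= X]mulr1; apply: ler_wpM2l => //; exact: Bu.
by rewrite -[X in _ <= X]mulr1; apply: ler_wpM2l => //; exact: Bv.
Qed.
Definition netF : set_system I := filter_from [set: I] (fun i0 => [set i | le i0 i]).

Lemma netF_filter_ : Filter netF.
Proof.
have [[i0] [lerr [letr ledir]]] := Hdir.
apply: filter_from_filter; first by exists i0.
move=> i j _ _; have [k [ik jk]] := ledir i j.
by exists k => // l /= kl; split; apply: letr kl.
Qed.

#[local] Instance netF_proper : ProperFilter netF.
Proof.
apply: filter_from_proper; first exact: netF_filter_.
by move=> i _; exists i => /=; case: Hdir => _ [lerr _].
Qed.

Lemma netF_le i0 : netF [set i | le i0 i].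
Proof. by exists i0. Qed.

Lemma netF_ex (P : I -> Prop) : netF P -> exists i0, forall i, le i0 i -> P i.
Proof. by case=> i0 _ h; exists i0. Qed.

Lemma ex_uu : forall i, exists u : eps_type FK E, eps_set FK E u /\ jE (f i) = Sop FK E Om jK u.
Proof. by move=> i; have [u [eu [_ ju]]] := Hf i; exists u. Qed.

Definition uu : I -> eps_type FK E := projT1 (choice ex_uu).
Lemma uuP i : eps_set FK E (uu i) /\ jE (f i) = Sop FK E Om jK (uu i).
Proof. exact: (projT2 (choice ex_uu) i). Qed.

Definition SF : eps_type FK E -> FE := projT1 (cid Hcompat.2).
Lemma SFP : (forall u, eps_set FK E u -> jE (SF u) = Sop FK E Om jK u) /\
    {within eps_set FK E, continuous SF} /\
    exists SFinv : FE -> eps_type FK E,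
      (forall u, eps_set FK E u -> SFinv (SF u) = u) /\
      {within SF @` eps_set FK E, continuous SFinv}.
Proof. exact: (projT2 (cid Hcompat.2)). Qed.

Lemma f_SF i : f i = SF (uu i).
Proof. by apply: jE_inj; rewrite (SFP.1 _ (uuP i).1) (uuP i).2. Qed.

Lemma TE_uu i x : dual (fun g => TK g x) /\ TE (f i) x = uu i (fun g => TK g x).
Proof.
have [g [jg Tg]] := Hcons (uu i) (uuP i).1.
have -> : f i = g by apply: jE_inj; rewrite jg (uuP i).2.
exact: Tg.
Qed.

Lemma dual_TK x : dual (fun g => TK g x).
Proof. by case: Hdir => -[i0] _; exact: (TE_uu i0 x).1. Qed.

Lemma dual_delta x : dual (delta FK Om jK x).
Proof. exact: Hcompat.1. Qed.
Lemma exC : exists C : K, 0 < C /\ forall i x, `|TE (f i) x| * nu x <= C.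
Proof.
have [C hC] := Hbd; exists (`|C| + 1); split; first by rewrite ltr_wpDl.
have C0 : 0 <= C.
  case: Hdir => -[i0] _; case: Hom => x0.
  by apply: le_trans (hC i0 x0); rewrite mulr_ge0 // ltW.
move=> i x; apply: le_trans (hC i x) _; rewrite ger0_norm //.
by rewrite lerDl.
Qed.
Definition Cb := projT1 (cid exC).
Lemma Cb_gt0 : 0 < Cb. Proof. exact: (projT2 (cid exC)).1. Qed.
Lemma Cb_bd i x : `|TE (f i) x| * nu x <= Cb. Proof. exact: (projT2 (cid exC)).2. Qed.

Definition u0 : eps_type FK E := fun _ => 0.
Lemma eps_u0 : eps_set FK E u0.
Proof.
split; first by move=> *; rewrite /u0 scaler0 addr0.
split; last by [].
apply/subspace_continuousP => x _; rewrite /u0. exact: cvg_cst.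
Qed.

Lemma TKB_scaled (h : FK) c : 0 < c -> (forall x, `|TK h x| * nu x <= c) -> B (c^-1 *: h).
Proof.
move=> c0 hb x; rewrite TKZ normrM ger0_norm; last by rewrite invr_ge0 ltW.
rewrite -mulrA.
rewrite ler_pdivrMl // mulr1; exact: hb.
Qed.

Lemma ev_cont (h : FK) (c : K) (y0 : dual_kappa FK) : 0 < c -> dual y0 ->
  (forall x, `|TK h x| * nu x <= c) ->
  (fun y : dual_kappa FK => y h) @ within dual (nbhs y0) --> y0 h.
Proof.
move=> c0 dy0 hb; apply/cvgrPdist_lt => eps eps0.
have Bh := TKB_scaled _ _ c0 hb.
have r0 : 0 < eps / c by rewrite divr_gt0.
have N : nbhs y0 [set g : dual_kappa FK | forall b, B b -> ball (y0 b) (eps / c) (g b)].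
  apply: (@fam_nbhs _ _ (acc_family FK) B [set xy | ball xy.1 (eps / c) xy.2] y0).
    exact: (entourage_ball _ (PosNum r0)).
  exact: B_acc.
near=> y.
have dy : dual y by near: y; exact: withinT.
have hy : forall b, B b -> ball (y0 b) (eps / c) (y b).
  by near: y; apply: cvg_within; exact: N.
have := hy _ Bh; rewrite -ball_normE /ball_ /=.
rewrite (dualZ _ _ _ dy0) (dualZ _ _ _ dy) -mulrBr normrM gtr0_norm; last by rewrite invr_gt0.
by rewrite [_ * `|_|]mulrC ltr_pM2r // invr_gt0.
Unshelve. all: by end_near.
Qed.
Lemma jK0 x : jK 0 x = 0.
Proof.
have := jK_lin 1 0 0 x; rewrite scale1r addr0 mul1r => h.
by apply: (@addrI _ (jK 0 x)); rewrite addr0 -h.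
Qed.

Lemma repr (e : E -> K) : (forall a v z, e (a *: v + z) = a * e v + e z) ->
  (forall z, `|e z| <= `|z|) -> forall i, exists h : FK,
  (forall y, dual y -> e (uu i y) = y h) /\ (forall x, `|TK h x| * nu x <= Cb).
Proof.
move=> elin ebd i.
have ec := @lin_bdd_cont _ _ e elin ebd.
have e0_ : e 0 = 0.
  have := elin 1 0 0; rewrite scale1r addr0 mul1r => h.
  by apply: (@addrI _ (e 0)); rewrite addr0 -h.
have [h [jh Th]] := Hstrong e (conj elin ec) (f i).
have hbd : forall x, `|TK h x| * nu x <= Cb.
  move=> x; rewrite Th; apply: le_trans (Cb_bd i x).
  by apply: ler_wpM2r; [exact: ltW | exact: ebd].
exists h; split; last exact: hbd.
move=> y dy.
case: (pselect (exists e1 : E, e1 != 0)) => [[e1 e1n0]|allz]; last first.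
  have z0 : forall z : E, z = 0.
    by move=> z; apply/eqP; apply: contrapT => /negP nz; apply: allz; exists z.
  have h0 : h = 0.
    apply: jK_inj; rewrite jh; apply: funext => x.
    by rewrite (z0 (jE (f i) x)) e0_ jK0.
  by rewrite h0 dual0 // (z0 (uu i y)) e0_.
pose v (y : dual_kappa FK) := e (uu i y) - y h.
have vlin : forall a y1 y2, dual y1 -> dual y2 ->
    v (fun g => a * y1 g + y2 g) = a * v y1 + v y2.
  move=> a y1 y2 d1 d2; rewrite /v ((uuP i).1.1 a y1 y2 d1 d2) elin /=; ring.
pose u' : eps_type FK E := fun y => if `[< dual y >] then v y *: e1 else 0.
have eu' : eps_set FK E u'.
  split; [|split].
  - move=> a y1 y2 d1 d2.
    rewrite /u' (asboolT (dual_comb _ _ _ d1 d2)) (asboolT d1) (asboolT d2).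
    by rewrite vlin // scalerDl scalerA.
  - apply/subspace_continuousP => y0 dy0.
    have cu : (uu i : dual_kappa FK -> E) @ within dual (nbhs y0) --> uu i y0.
      by have := (uuP i).1.2.1; move/subspace_continuousP => /(_ y0 dy0).
    have cv : v @ within dual (nbhs y0) --> v y0.
      apply: cvgB; last exact: (ev_cont _ _ _ Cb_gt0 dy0 hbd).
      exact: (continuous_cvg _ (ec _) cu).
    have cv2 : (fun y => v y *: e1) @ within dual (nbhs y0) --> v y0 *: e1.
      exact: cvgZl cv.
    rewrite /from_subspace /u'; cbv beta; rewrite (asboolT dy0); apply: cvg_trans cv2.
    apply: near_eq_cvg; near=> z.
    have dy1 : dual z by near: z; exact: withinT.
    by rewrite (asboolT dy1).
  - by move=> y1 ndy; rewrite /u'; cbv beta; rewrite (asboolF ndy).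
have Su' : Sop FK E Om jK u' = Sop FK E Om jK u0.
  apply: funext => x; rewrite /Sop /u0 /u' (asboolT (dual_delta x)).
  have -> : v (delta FK Om jK x) = 0.
    rewrite /v; apply/eqP; rewrite subr_eq0; apply/eqP.
    by rewrite /delta; cbv beta; rewrite jh (uuP i).2.
  by rewrite scale0r.
have [_ [_ [SFinv [SFinvK _]]]] := SFP.
have : u' = u0.
  rewrite -(SFinvK _ eu') -(SFinvK _ eps_u0); congr SFinv; apply: jE_inj.
  by rewrite (SFP.1 _ eu') (SFP.1 _ eps_u0) Su'.
move=> /(congr1 (fun w : eps_type FK E => w y)).
rewrite /u' /u0 (asboolT dy) => /eqP; rewrite scaler_eq0 (negbTE e1n0) orbF subr_eq0.
by move/eqP.
Unshelve. all: by end_near.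
Qed.
Lemma uu_bound i y t : dual y -> (forall b, B b -> `|y b| <= t) -> `|uu i y| <= Cb * t.
Proof.
move=> dy hyt.
have [e [elin ebd ew]] := Hnorm (uu i y).
have [h [hrep hbd]] := repr e elin ebd i.
rewrite -ew hrep //.
have Bh := TKB_scaled _ _ Cb_gt0 hbd.
have -> : y h = Cb * y (Cb^-1 *: h) by rewrite dualZ // mulrA mulfV ?mul1r // gt_eqF // Cb_gt0.
rewrite normrM gtr0_norm; last exact: Cb_gt0.
apply: ler_wpM2l; [exact: ltW Cb_gt0 | exact: hyt].
Qed.

Lemma open_gtnorm (x : om) (c : K) : open [set b : FK | c < `|TK b x|].
Proof.
rewrite openE => b hb.
have cTK := (dual_TK x).2 b.
have e0 : 0 < `|TK b x| - c by rewrite subr_gt0.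
move/cvgrPdist_lt : cTK => /(_ _ e0) near_b.
rewrite /interior; near=> b'.
have h : `|TK b x - TK b' x| < `|TK b x| - c by near: b'; exact: near_b.
have := le_lt_trans (lerB_dist _ _) h.
by rewrite ltrD2l ltrN2.
Unshelve. all: by end_near.
Qed.
Lemma xb_ex : exists xb : FK -> om, forall b, (exists x, U x /\ TK b x != 0) ->
  U (xb b) /\ TK b (xb b) != 0.
Proof.
have : forall b : FK, exists x : om, (exists x, U x /\ TK b x != 0) -> U x /\ TK b x != 0.
  move=> b; have [[x hx]|nx] := pselect (exists x, U x /\ TK b x != 0).
    by exists x.
  by case: Hom => x0; exists x0.
by move/choice => [xb hxb]; exists xb.
Qed.

Lemma lk_ex : exists lk : om -> E, forall x, U x -> net_cvg I le E (fun i => TE (f i) x) (lk x).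
Proof.
have : forall x : om, exists l : E, U x -> net_cvg I le E (fun i => TE (f i) x) l.
  move=> x; have [Ux|nUx] := pselect (U x).
    by have [l hl] := Hlim x Ux; exists l.
  by exists 0.
by move/choice => [lk hlk]; exists lk.
Qed.

Lemma netF_cvg (g : I -> E) l r : net_cvg I le E g l -> 0 < r ->
  netF [set i | `|l - g i| < r].
Proof.
move=> hg r0; have [i0 hi0] := hg _ (@near_norm_lt _ _ l r r0).
by exists i0 => // i /hi0.
Qed.
HB.instance Definition _ := isPointed.Build FK 0.
Lemma unif_cauchy (M : set (dual_kappa FK)) : M `<=` dual -> equicont FK M ->
  forall eps, 0 < eps -> exists i0, forall i j, le i0 i -> le i0 j ->
    forall y, M y -> `|uu i y - uu j y| <= eps.
Proof.
move=> Md Meq eps eps0.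
have [xb xbP] := xb_ex.
have [lk lkP] := lk_ex.
have Cb0 := Cb_gt0.
have C2 : 0 < 2 * Cb by rewrite mulr_gt0.
pose eps' := eps / (2 * Cb).
have e'0 : 0 < eps' by rewrite divr_gt0.
pose W0 := [set b : FK | forall y, M y -> `|y b - y 0| < eps'].
have nW0 : nbhs (0 : FK) W0 := Meq 0 eps' e'0.
pose O0 := interior W0.
pose O1 := fun k : FK => [set b' : FK | U (xb k) /\ TK k (xb k) != 0 /\
   `|TK k (xb k)| / 2 < `|TK b' (xb k)|].
pose Ob := fun k => O1 k `|` O0.
have oOb : forall k, B k -> open (Ob k).
  move=> k _; apply: openU; last exact: open_interior.
  have [[Uk nk]|nk] := pselect (U (xb k) /\ TK k (xb k) != 0).
    have -> : O1 k = [set b' | `|TK k (xb k)| / 2 < `|TK b' (xb k)|].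
      by apply/seteqP; split => b' /=; [case=> _ [_ ->] | move=> h; split; [|split]].
    exact: open_gtnorm.
  have -> : O1 k = set0.
    by apply/seteqP; split => b' //= [U1 [n1 _]]; apply: nk.
  exact: open0.
have covB : B `<=` cover B Ob.
  move=> b Bb; exists b => //.
  have [ex|nex] := pselect (exists x, U x /\ TK b x != 0).
    have [Ux nx] := xbP b ex; left; split; [done|split; first done].
    by rewrite ltr_pdivrMr // ltr_pMr ?normr_gt0 // ltr1n.
  right; have b0 : b = 0.
    apply: HU; first by exists 1; exact: Bb.
    move=> x Ux; apply/eqP; apply: contrapT => /negP nx; apply: nex; exists x; done.
  by rewrite b0; exact: nW0.
have := Hball; rewrite (@compact_cover FK) => /(_ FK B Ob oOb covB) [D' sD' covD'].
pose A k := [set i | U (xb k) /\ TK k (xb k) != 0 ->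
   `|lk (xb k) - TE (f i) (xb k)| < Cb * `|TK k (xb k)| / 2].
have nA : forall k, netF (A k).
  move=> k; have [[Uk nk]|nk] := pselect (U (xb k) /\ TK k (xb k) != 0).
    have r0 : 0 < Cb * `|TK k (xb k)| / 2 by rewrite divr_gt0 // mulr_gt0 // normr_gt0.
    apply: (filterS _ (netF_cvg _ _ _ (lkP _ Uk) r0)) => i h _; exact: h.
  by apply: (filterS _ filterT) => i _ /nk.
have [i0 hi0] := netF_ex _ (@filter_bigI _ _ D' A netF _ (fun k _ => nA k)).
exists i0 => i j i0i i0j y My.
have dy := Md _ My.
set w := uu i y - uu j y.
rewrite real_leNgt ?normr_real ?gtr0_real //; apply/negP => hw.
have [e [elin ebd ew]] := Hnorm w.
have eB : forall a b, e (a - b) = e a - e b.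
  move=> a b; have := elin (-1) b a; rewrite scaleN1r mulN1r => h.
  by rewrite addrC h addrC.
have [hi [hirep hibd]] := repr e elin ebd i.
have [hj [hjrep hjbd]] := repr e elin ebd j.
pose d := hi - hj.
have dbd : forall x, `|TK d x| * nu x <= 2 * Cb.
  move=> x; rewrite TKB; apply: le_trans (_ : (`|TK hi x| + `|TK hj x|) * nu x <= _).
    by apply: ler_wpM2r; [exact: ltW | exact: ler_normB].
  by rewrite mulrDl mulr_natl mulr2n; apply: lerD.
have Bb' := TKB_scaled _ _ C2 dbd.
have yb' : y ((2 * Cb)^-1 *: d) = (2 * Cb)^-1 * e w.
  by rewrite dualZ // /d dualB // -hirep // -hjrep // /w eB.
have hy : eps' < `|y ((2 * Cb)^-1 *: d)|.
  rewrite yb' normrM ew gtr0_norm; last by rewrite invr_gt0.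
  by rewrite /eps' [_^-1 * _]mulrC ltr_pM2r // invr_gt0.
have [k Dk Obk] := covD' _ Bb'.
case: Obk => [[Uk [nk hk]]|O0b].
- have hA := hi0 i i0i k Dk (conj Uk nk).
  have hA' := hi0 j i0j k Dk (conj Uk nk).
  move: hk hA hA'; set xk := xb k => hk hA hA'.
  have TKh : forall l h, (forall y, dual y -> e (uu l y) = y h) -> TK h xk = e (TE (f l) xk).
    by move=> l h hrep; rewrite (TE_uu l xk).2 (hrep _ (dual_TK xk)).
  have tri : `|TE (f i) xk - TE (f j) xk| < Cb * `|TK k xk|.
    apply: (@le_lt_trans _ _ (`|lk xk - TE (f i) xk| + `|lk xk - TE (f j) xk|)).
      have -> : TE (f i) xk - TE (f j) xk = (lk xk - TE (f j) xk) - (lk xk - TE (f i) xk).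
        by rewrite [RHS]addrC opprB addrA subrK.
      by rewrite [X in _ <= X]addrC; exact: ler_normB.
    by rewrite (splitr (Cb * `|TK k xk|)); exact: ltrD.
  have : `|TK ((2 * Cb)^-1 *: d) xk| < `|TK k xk| / 2.
    rewrite TKZ /d TKB (TKh _ _ hirep) (TKh _ _ hjrep) -eB normrM gtr0_norm; last by rewrite invr_gt0.
    apply: (@le_lt_trans _ _ ((2 * Cb)^-1 * `|TE (f i) xk - TE (f j) xk|)).
      by apply: ler_wpM2l; [rewrite invr_ge0 ltW | exact: ebd].
    apply: (@lt_le_trans _ _ ((2 * Cb)^-1 * (Cb * `|TK k xk|))).
      by rewrite ltr_pM2l // invr_gt0.
    rewrite le_eqVlt; apply/orP; left; apply/eqP.
    field; rewrite ?gt_eqF //.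
  by move=> /(lt_trans hk); rewrite ltxx.
- have := nbhs_singleton O0b => /(_ y My); rewrite dual0 // subr0 => h.
  by move: (lt_trans hy h); rewrite ltxx.
Qed.
Lemma equicont1 y : dual y -> equicont FK [set y].
Proof.
move=> dy f0 e e0.
have := dy.2 f0; move/cvgrPdist_lt => /(_ _ e0) h.
near=> g => y' ->.
rewrite distrC; near: g; exact: h.
Unshelve. all: by end_near.
Qed.

Lemma lim_dist_le (g : I -> E) l a c : g @ netF --> l ->
  netF [set i | `|a - g i| <= c] -> `|a - l| <= c.
Proof.
move=> gl hc.
have [i0 hi0] := filter_ex hc.
have c0 : 0 <= c := le_trans (normr_ge0 _) hi0.
rewrite real_leNgt ?normr_real ?ger0_real //; apply/negP => h.
have eta0 : 0 < `|a - l| - c by rewrite subr_gt0.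
move/cvgrPdist_lt : gl => /(_ _ eta0) hl.
have [i [hi1 hi2]] := filter_ex (filterI hc hl).
rewrite distrC in hi2; have := le_lt_trans (ler_distD (g i) a l) (ler_ltD hi1 hi2).
by rewrite [c + _]addrC subrK ltxx.
Qed.

Lemma cauchy_pt y : dual y -> cvg ((fun i => uu i y) @ netF).
Proof.
move=> dy; apply: cauchy_cvg; apply: cauchy_exP => eps eps0.
have e2 : 0 < eps / 2 by rewrite divr_gt0.
have sy : [set y] `<=` dual by move=> z ->.
have [i0 hi0] := unif_cauchy [set y] sy (equicont1 _ dy) _ e2.
exists (uu i0 y); exists i0 => // i /= i0i.
rewrite -ball_normE /ball_ /=.
apply: le_lt_trans (hi0 i0 i _ i0i y erefl) _.
  by case: Hdir => _ [lerr _].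
by rewrite ltr_pdivrMr // ltr_pMr // ltr1n.
Qed.

Definition u : eps_type FK E := fun y =>
  if `[< dual y >] then lim ((fun i => uu i y) @ netF) else 0.

Lemma u_cvg y : dual y -> (fun i => uu i y) @ netF --> u y.
Proof. by move=> dy; rewrite /u (asboolT dy); exact: cauchy_pt. Qed.

Lemma u_unif (M : set (dual_kappa FK)) : M `<=` dual -> equicont FK M ->
  forall eps, 0 < eps -> exists i0, forall i, le i0 i ->
    forall y, M y -> `|uu i y - u y| <= eps.
Proof.
move=> Md Meq eps eps0; have [i0 hi0] := unif_cauchy M Md Meq _ eps0.
exists i0 => i i0i y My; apply: (lim_dist_le _ _ _ _ (u_cvg _ (Md _ My))).
by exists i0 => // j /= i0j; apply: hi0.
Qed.

Lemma u_bound y t : dual y -> (forall b, B b -> `|y b| <= t) -> `|u y| <= Cb * t.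
Proof.
move=> dy hyt; rewrite -[u y]opprK normrN -[- u y]add0r.
apply: (lim_dist_le _ _ _ _ (u_cvg _ dy)).
by apply: filterS filterT => i _ /=; rewrite sub0r normrN; exact: uu_bound.
Qed.
Lemma u_lin a y1 y2 : dual y1 -> dual y2 ->
  u (fun g => a * y1 g + y2 g) = a *: u y1 + u y2.
Proof.
move=> d1 d2; have dz := dual_comb a _ _ d1 d2.
have e : (fun i => uu i (fun g => a * y1 g + y2 g)) = (fun i => a *: uu i y1 + uu i y2).
  by apply: funext => i; exact: ((uuP i).1.1 a y1 y2 d1 d2).
have c1 : (fun i => uu i (fun g => a * y1 g + y2 g)) @ netF --> a *: u y1 + u y2.
  rewrite e; apply: cvgD; last exact: u_cvg.
  by apply: cvgZ; [exact: cvg_cst | exact: u_cvg].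
exact: (cvg_unique (@norm_hausdorff _ E) (u_cvg _ dz) c1).
Qed.

Lemma u_cont : {within (dual : set (dual_kappa FK)), continuous (u : dual_kappa FK -> E)}.
Proof.
apply/subspace_continuousP => y0 dy0; apply/cvgrPdist_lt => eps eps0.
have Cb0 := Cb_gt0.
have r0 : 0 < eps / (2 * Cb) by rewrite divr_gt0 // mulr_gt0.
have N : nbhs y0 [set g : dual_kappa FK | forall b, B b -> ball (y0 b) (eps / (2 * Cb)) (g b)].
  apply: (@fam_nbhs _ _ (acc_family FK) B [set xy | ball xy.1 (eps / (2 * Cb)) xy.2] y0).
    exact: (entourage_ball _ (PosNum r0)).
  exact: B_acc.
near=> y.
have dy : dual y by near: y; exact: withinT.
have hy : forall b, B b -> ball (y0 b) (eps / (2 * Cb)) (y b).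
  by near: y; apply: cvg_within; exact: N.
have dz := dual_comb (-1) _ _ dy dy0.
have -> : u y0 - u y = u (fun g => -1 * y g + y0 g) by rewrite u_lin // scaleN1r addrC.
apply: le_lt_trans (u_bound _ (eps / (2 * Cb)) dz _) _.
  move=> b Bb; have := hy _ Bb; rewrite -ball_normE /ball_ /= mulN1r addrC => h.
  exact: ltW.
have -> : Cb * (eps / (2 * Cb)) = eps / 2.
  field; rewrite ?gt_eqF //.
by rewrite ltr_pdivrMr // ltr_pMr // ltr1n.
Unshelve. all: by end_near.
Qed.

Lemma eps_u : eps_set FK E u.
Proof.
split; first by move=> a y1 y2 d1 d2; exact: u_lin.
split; first exact: u_cont.
by move=> y ndy; rewrite /u (asboolF ndy).
Qed.
Lemma uu_to_u : (uu : I -> eps_type FK E) @ netF --> (u : eps_type FK E).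
Proof.
apply/fam_cvgP => M [Md Meq] P /uniform_nbhs [Ent [entE sub]].
move: entE; rewrite -entourage_from_ballE => -[eps /= eps0 hsub].
have e2 : 0 < eps / 2 by rewrite divr_gt0.
have [i0 hi0] := u_unif M Md Meq _ e2.
exists i0 => // i /= i0i; apply: sub => y My; apply: hsub.
rewrite /= -ball_normE /ball_ /= distrC.
apply: le_lt_trans (hi0 i i0i y My) _.
by rewrite ltr_pdivrMr // ltr_pMr // ltr1n.
Qed.

Lemma main_sec : exists g : FE, Feps_nu FK E FE Om om jK jE TK nu g /\ net_cvg I le FE f g.
Proof.
exists (SF u); split.
  exists u; split; first exact: eps_u.
  split; last exact: (SFP.1 _ eps_u).
  exists (Cb * 1) => y [dy hy]; apply: u_bound => // b Bb; exact: hy.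
move=> N nN.
have := SFP.2.1; move/subspace_continuousP => /(_ u eps_u) /(_ N nN) hw.
have hw' : nbhs (u : eps_type FK E) [set v | eps_set FK E v -> N (SF v)] := hw.
have := uu_to_u _ hw' => -[i0 _ hi0].
exists i0 => i i0i; rewrite f_SF; apply: (hi0 i i0i).
exact: (uuP i).1.
Qed.
End Main.
Lemma norming_real (R : realType) (E : normedModType R) (w : E) :
  exists e : E -> R, [/\ (forall a v z, e (a *: v + z) = a * e v + e z),
     (forall z, `|e z| <= `|z|) & `|e w| = `|w|].
Proof.
have scD : forall (a : R) (x y : E), a *: (x + y) = a *: x + a *: y by move=> *; exact: scalerDr.
have scDl : forall (a b : R) (x : E), (a + b) *: x = a *: x + b *: x by move=> *; exact: scalerDl.
have scA : forall (a b : R) (x : E), a *: (b *: x) = (a * b) *: x by move=> *; exact: scalerA.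
have sc1 : forall x : E, 1 *: x = x by move=> x; exact: scale1r.
have pD : forall x y : E, `|x + y| <= `|x| + `|y| by move=> x y; exact: ler_normD.
have pZ : forall (a : R) (x : E), `|a *: x| = `|a| * `|x| by move=> a x; exact: normrZ.
have [psi [lin bd pw]] := @HB_real R E (fun a x => a *: x) scD scDl scA sc1 (fun x => `|x|) pD pZ w.
have psi0 : psi 0 = 0.
  have := lin 1 0 0; rewrite scale1r addr0 mul1r => h.
  by apply: (@addrI _ (psi 0)); rewrite addr0 -h.
have psiN : forall x, psi (- x) = - psi x.
  by move=> x; have := lin (-1) x 0; rewrite addr0 psi0 addr0 scaleN1r mulN1r.
exists psi; split => //.
- move=> z; rewrite ler_norml bd andbT.
  by rewrite lerNl -psiN -(normrN z); exact: bd.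
- by rewrite pw normr_id.
Qed.
Theorem mainTheorem3
  (K : numFieldType) (HK : RorC K)
  (E : completeNormedModType K)
  (Om om : Type) (HOm : inhabited Om) (Hom : inhabited om)
  (FK : tvsType K) (hFK : hausdorff_space FK)
  (jK : FK -> Om -> K) (jK_lin : linear_into_Kfun FK Om jK)
  (jK_inj : injective jK)
  (FE : tvsType K) (hFE : hausdorff_space FE)
  (jE : FE -> Om -> E) (jE_lin : linear_into_Efun FE E Om jE)
  (jE_inj : injective jE)
  (Hcompat : eps_into_compatible FK E FE Om jK jE)
  (TK : FK -> om -> K) (TK_lin : linear_into_Kfun FK om TK)
  (TE : FE -> om -> E) (TE_lin : linear_into_Efun FE E om TE)
  (Hcons : consistent_family FK E FE Om om jK jE TE TK)
  (Hstrong : strong_family FK E FE Om om jK jE TE TK)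
  (nu : om -> K) (nu_pos : forall x, 0 < nu x)
  (Hbanach : Fnu_banach FK om TK nu)
  (Hball : compact (Bnu FK om TK nu))
  (U : set om) (HU : uniqueness_set FK om TK nu U)
  (I : Type) (le : I -> I -> Prop) (Hdir : directed_preorder I le)
  (f : I -> FE)
  (Hf : forall i, Feps_nu FK E FE Om om jK jE TK nu (f i))
  (Hbd : exists C : K, forall i x, `|TE (f i) x| * nu x <= C)
  (Hlim : forall x, U x -> exists l : E, net_cvg I le E (fun i => TE (f i) x) l) :
  exists g : FE, Feps_nu FK E FE Om om jK jE TK nu g /\ net_cvg I le FE f g.
Proof.
case: HK => R [eK|eK]; subst K.
- have Hnorm := @norming_real R E.
  by eapply main_sec; eassumption.
- have Hnorm := @norming_cplx R E.
  by eapply main_sec; eassumption.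
Qed.
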